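(* Let $\mathcal{O}$ be the class of finite ordinal potential games, and let $\phi$ assign to each $\Gamma\in\mathcal{O}$ the set $\phi(\Gamma)$ of strongly maximal equilibria of $\Gamma$. Then $\phi$ satisfies: (i) existence: $\phi(\Gamma)\neq\emptyset$ for every $\Gamma\in\mathcal{O}$; (ii) one-person rationality: for every one-player game $\Gamma\in\mathcal{O}$, $\phi(\Gamma)$ is the set of strategies maximizing the player's payoff; (iii) consistency: for every $\Gamma=(I,(S_i),(u_i))\in\mathcal{O}$, every nonempty proper subset $J\subsetneq I$ and every $s^*\in\phi(\Gamma)$, the reduced game $\Gamma^{J,s^*}$ belongs to $\mathcal{O}$ and $s^*_J=(s^*_j)_{j\in J}\in\phi(\Gamma^{J,s^*})$.
   Context: A finite strategic-form game $\Gamma=(I,(S_i)_{i\in I},(u_i)_{i\in I})$ has finite player set $I$, finite nonempty strategy sets $S_i$, utilities $u_i:S\to\mathbb{R}$, $S=\prod_i S_i$; $(s_i',s_{-i})$ denotes $s$ with player $i$'s strategy replaced by $s_i'$. A pure Nash equilibrium is $s\in S$ with $u_i(s)\ge u_i(s_i',s_{-i})$ for all $i$ and $s_i'\in S_i$. A function $P:S\to\mathbb{R}$ is an ordinal potential if for all $i$, $a,b\in S_i$, $\sigma_{-i}\in S_{-i}$: $u_i(a,\sigma_{-i})>u_i(b,\sigma_{-i})\iff P(a,\sigma_{-i})>P(b,\sigma_{-i})$; $\Gamma$ is an ordinal potential game if one exists. The ordinal deployment graph has vertex set $S$ and an arc $(s,s')$, $s'\neq s$, iff $s'=(s_i',s_{-i})$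 for some $i$ with $u_i(s')\ge u_i(s)$. Define $s\succeq s'$ iff there is a directed path (possibly of length $0$) from $s'$ to $s$, and $s\succ s'$ iff $s\succeq s'$ and not $s'\succeq s$. A strongly maximal state is an $s^*$ with no $s$ satisfying $s\succ s^*$. Two states communicate if each is reachable from the other by a directed path. A strongly maximal equilibrium is a strongly maximal state $s$ such that every state communicating with $s$ (including $s$) is a pure Nash equilibrium. For a nonempty proper subset $J\subsetneq I$ and $s\in S$, the reduced game $\Gamma^{J,s}=(J,(S_j)_{j\in J},(w_j)_{j\in J})$ has player set $J$, the same strategy sets $S_j$, and payoffs $w_j(\sigma)=u_j(\sigma,s_{-J})$ for $\sigma\in\prod_{j\in J}S_j$, where $s_{-J}$ are the strategies of the players outside $J$ in $s$. *)

(* Defs.v *)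
From HB Require Import structures.
From mathcomp Require Import all_boot all_order all_algebra.
From Stdlib Require Import Relations.Relation_Operators.
Set Implicit Arguments. Unset Strict Implicit. Unset Printing Implicit Defensive.
Import Order.TTheory GRing.Theory Num.Theory.
Local Open Scope ring_scope.

Record game (R : realDomainType) := Game {
  player : finType;
  strat : player -> finType;
  util : player -> {dffun forall i : player, strat i} -> R
}.
Arguments player {R} g.
Arguments strat {R} g i.
Arguments util {R} g i _.

Section GameDefs.
Variable (R : realDomainType) (G : game R).

Definition profile := {dffun forall i : player G, strat G i}.

Definition dev (i : player G) (s t : profile) : Prop :=
  forall j, j != i -> t j = s j.

Definition finite_game : Prop :=
  (0 < #|player G|)%N /\ forall i, (0 < #|strat G i|)%N.

Definition ordinal_potential (P : profile -> R) : Prop :=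
  forall i s t, dev i s t -> (util G i s < util G i t <-> P s < P t).

Definition inO : Prop := finite_game /\ exists P, ordinal_potential P.

Definition nash (s : profile) : Prop :=
  forall i t, dev i s t -> util G i t <= util G i s.

Definition arc (s s' : profile) : Prop :=
  s' <> s /\ exists i, dev i s s' /\ util G i s <= util G i s'.

Definition reach : profile -> profile -> Prop := clos_refl_trans profile arc.

Definition succeq (s s' : profile) : Prop := reach s' s.
Definition succ (s s' : profile) : Prop := succeq s s' /\ ~ succeq s' s.

Definition strongly_maximal (s : profile) : Prop := ~ exists t, succ t s.

Definition communicate (s t : profile) : Prop := reach s t /\ reach t s.

Definition SME (s : profile) : Prop :=
  strongly_maximal s /\ forall t, communicate s t -> nash t.

End GameDefs.

Section Reduced.
Variable (R : realDomainType) (G : game R) (J : {set player G}).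

Definition Jplayer : finType := {j : player G | j \in J}.

Definition Jprofile := {dffun forall j : Jplayer, strat G (val j)}.

(* the full profile (sigma, s_{-J}) *)
Definition extend (s : profile G) (sigma : Jprofile) : profile G :=
  [ffun i => match (i \in J) as b return (i \in J) = b -> strat G i with
             | true => fun H => sigma (exist _ i H)
             | false => fun _ => s i end erefl].

Definition reduced (s : profile G) : game R :=
  @Game R Jplayer (fun j => strat G (val j))
        (fun j sigma => util G (val j) (extend s sigma)).

Definition restrict (s : profile G) : profile (reduced s) :=
  [ffun j : Jplayer => s (val j)].

End Reduced.

(* Main.v *)
Require Import Defs.
From HB Require Import structures.
From mathcomp Require Import all_boot all_order all_algebra.
From Stdlib Require Import Relations.Relation_Operators ClassicalEpsilon.
Import Order.TTheory GRing.Theory Num.Theory.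
Local Open Scope ring_scope.

Set Implicit Arguments.
Section Aux.
Variable (R : realDomainType).

Lemma ext_val (G : game R) (J : {set player G}) s (sg : Jprofile J) (j : Jplayer J) :
  extend s sg (val j) = sg j.
Proof.
case: j => i Hi /=. rewrite ffunE.
generalize (erefl (i \in J)). generalize (i \in J) at 2 3.
case => e. by rewrite (bool_irrelevance e Hi).
by rewrite Hi in e.
Qed.

Lemma ext_out (G : game R) (J : {set player G}) s (sg : Jprofile J) i :
  i \notin J -> extend s sg i = s i.
Proof.
move=> Hi. rewrite ffunE.
generalize (erefl (i \in J)). generalize (i \in J) at 2 3.
case => e //. by rewrite e in Hi.
Qed.

Lemma ext_restrict (G : game R) (J : {set player G}) s :
  extend s (restrict J s) = s.
Proof.
apply/ffunP => i. case Hi: (i \in J).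
  by rewrite -[i]/(val (exist (fun i => i \in J) i Hi)) ext_val ffunE.
by rewrite ext_out ?Hi.
Qed.

Lemma ext_inj (G : game R) (J : {set player G}) s (a b : Jprofile J) :
  extend s a = extend s b -> a = b.
Proof.
move=> E; apply/ffunP => j.
by have := congr1 (fun f : profile G => f (val j)) E; rewrite /= !ext_val.
Qed.

Lemma ext_dev (G : game R) (J : {set player G}) s (a b : profile (reduced J s)) j :
  dev j a b -> dev (val j) (extend s a) (extend s b).
Proof.
move=> D i Hij. case Hi: (i \in J).
  rewrite -[i]/(val (exist (fun i => i \in J) i Hi)) !ext_val.
  apply: D. apply/eqP => E. by rewrite -E eqxx in Hij.
by rewrite !ext_out ?Hi.
Qed.

Lemma dev_sym (G : game R) i (a b : profile G) : dev i a b -> dev i b a.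
Proof. by move=> D j H; rewrite D. Qed.

Lemma reach_P (G : game R) P : ordinal_potential P ->
  forall a b : profile G, reach a b -> P a <= P b.
Proof.
move=> HP a b; elim => //.
- move=> x y [_ [i [D U]]]. rewrite leNgt; apply/negP => H.
  have := (proj2 (HP i y x (dev_sym D))) H. by rewrite ltNge U.
- move=> x y z _ H1 _ H2; exact: le_trans H1 H2.
Qed.

Lemma reach_trans (G : game R) (a b c : profile G) : reach a b -> reach b c -> reach a c.
Proof. move=> H1 H2; exact: rt_trans H1 H2. Qed.

Definition rb (G : game R) (a b : profile G) : bool :=
  if excluded_middle_informative (reach a b) then true else false.

Lemma rbP (G : game R) (a b : profile G) : rb a b <-> reach a b.
Proof. rewrite /rb; by case: excluded_middle_informative. Qed.

End Aux.
Unset Implicit Arguments.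

Theorem theorem3 (R : realDomainType) :
  (* (i) existence *)
  (forall G : game R, inO G -> exists s : profile G, SME s) /\
  (* (ii) one-person rationality *)
  (forall G : game R, inO G -> #|player G| = 1%N ->
     forall s : profile G,
       SME s <-> (forall (i : player G) (t : profile G), util G i t <= util G i s)) /\
  (* (iii) consistency *)
  (forall G : game R, inO G ->
     forall J : {set player G}, J != set0 -> J != setT ->
     forall s : profile G, SME s ->
       inO (reduced J s) /\ SME (restrict J s)).
Proof.
split; [|split].
- move=> G [[_ Hst] [P HP]].
  have ex i : exists x : strat G i, true.
    by have /card_gt0P [x _] := Hst i; exists x.
  pose s0 : profile G := [ffun i => xchoose (ex i)].
  pose Rs (s : profile G) := [set t | rb s t].
  have exn : exists n, [exists s, #|Rs s| == n] by exists #|Rs s0|; apply/existsP; exists s0.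
  case: (ex_minnP exn) => m /existsP [s /eqP Hs] Hmin.
  have back t : reach s t -> reach t s.
    move=> Hst'.
    have sub : Rs t \subset Rs s.
      apply/subsetP => x; rewrite !inE => /rbP H; apply/rbP; exact: reach_trans Hst' H.
    have le : (#|Rs s| <= #|Rs t|)%N by rewrite Hs; apply: Hmin; apply/existsP; exists t.
    have /eqP E : Rs t == Rs s by rewrite eqEcard sub le.
    have : s \in Rs s by rewrite inE; apply/rbP; exact: rt_refl.
    by rewrite -E inE => /rbP.
  exists s; split.
  + by move=> [t [H1 H2]]; apply: H2; apply: back.
  + move=> t [Hst' _] i t' D. rewrite leNgt; apply/negP => Hlt.
    have Ht : t' <> t by move=> E; rewrite E ltxx in Hlt.
    have Ar : reach t t' by apply: rt_step; split => //; exists i; split => //; exact: ltW.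
    have Hb : reach t' t := reach_trans (back _ (reach_trans Hst' Ar)) Hst'.
    have := reach_P HP Hb. rewrite leNgt => /negP; apply.
    exact: (proj1 (HP i t t' D)).
- move=> G _ H1 s.
  have one (i j : player G) : i = j.
    have : (#|player G| <= 1)%N by rewrite H1.
    by move/fintype_le1P => /(_ j) ->.
  have devall i (a b : profile G) : dev i a b by move=> j; rewrite (one j i) eqxx.
  have mono i (a b : profile G) : reach a b -> util G i a <= util G i b.
    elim => //.
    + by move=> x y [_ [k [_ U]]]; rewrite (one i k).
    + by move=> x y z _ A _ B; exact: le_trans A B.
  split.
  + move=> [_ HN] i t. apply: (HN s) => //; split; exact: rt_refl.
  + move=> Hmax; split.
    * move=> [t [H2 H3]]. apply: H3. case: (eqVneq t s) => [->|Hne]; first exact: rt_refl.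
      apply: rt_step; split; first by apply/eqP; rewrite eq_sym.
      have : (0 < #|player G|)%N by rewrite H1.
      case/card_gt0P => i _.
      by exists i; split => //; exact: devall.
    * move=> t [Hst _] i t' _. exact: le_trans (Hmax i t') (mono i _ _ Hst).
- move=> G [[Hpl Hst] [P HP]] J HJ _ s [SM HN].
  split.
  + split; first split.
    * case/set0Pn: HJ => x Hx. apply/card_gt0P.
      by exists (exist (fun i => i \in J) x Hx).
    * move=> j; exact: Hst.
    * exists (fun sg : profile (reduced J s) => P (extend s sg)).
      move=> j a b D. exact: (HP (val j) _ _ (ext_dev D)).
  + have L : forall a b : profile (reduced J s), reach a b ->
        communicate s (extend s a) -> communicate s (extend s b) /\ reach b a.
      move=> a b; elim.
      * move=> x y [Hne [j [D U]]] [C1 C2].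
        have U' : util G (val j) (extend s y) <= util G (val j) (extend s x).
          exact: (HN _ (conj C1 C2) (val j) _ (ext_dev D)).
        have ne : extend s y <> extend s x by move=> E; apply: Hne; exact: ext_inj E.
        have Ax : Defs.arc (extend s x) (extend s y).
          by split => //; exists (val j); split => //; exact: ext_dev.
        have Ay : Defs.arc (extend s y) (extend s x).
          split; first by move=> E; apply: ne.
          by exists (val j); split => //; apply: ext_dev; exact: dev_sym.
        split; first split.
        - exact: reach_trans C1 (rt_step _ _ _ _ Ax).
        - exact: reach_trans (rt_step _ _ _ _ Ay) C2.
        apply: rt_step; split; first by move=> E; apply: Hne.
        by exists j; split => //; exact: dev_sym.
      * move=> x C; split => //; exact: rt_refl.
      * move=> x y z _ IH1 _ IH2 C.
        case: (IH1 C) => C' B1. case: (IH2 C') => C'' B2.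
        split => //; exact: rt_trans B2 B1.
    have Cs : communicate s (extend s (restrict J s)).
      by rewrite ext_restrict; split; exact: rt_refl.
    split.
    * move=> [t [H1 H2]]; apply: H2. exact: (proj2 (L _ _ H1 Cs)).
    * move=> t [H1 _] j t' D.
      have [C _] := L _ _ H1 Cs.
      exact: (HN _ C (val j) _ (ext_dev D)).
Qed.
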